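(* Let $\mathcal O$ be the suboperad of $\mathrm{CNCB}$ generated by $a:=T_{bbb}$ and $c:=T_{buu}$. Then $\mathcal O$ admits the presentation with generators $a,c$ of arity $2$ and relations $$(c\circ_2 a)\circ_3 c = (c\circ_1 c)\circ_2 a,\qquad (a\circ_2 c)\circ_3 a=(a\circ_1 c)\circ_2 a.$$ That is, the operad morphism from the free operad on two binary generators $\alpha,\gamma$ to $\mathcal O$, sending $\alpha\mapsto a$ and $\gamma\mapsto c$, induces an isomorphism between $\mathcal O$ and the quotient of the free operad by the operadic congruence generated by $(\gamma\circ_2\alpha)\circ_3\gamma\equiv(\gamma\circ_1\gamma)\circ_2\alpha$ and $(\alpha\circ_2\gamma)\circ_3\alpha\equiv(\alpha\circ_1\gamma)\circ_2\alpha$.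
   Context: For $n\ge2$, a bicoloured noncrossing configuration (BNC) of size $n$ is a regular polygon with vertices $1,\dots,n+1$ clockwise, together with disjoint sets of blue and red arcs among the arcs $(i,j)$, $1\le i<j\le n+1$. The arcs $(i,i+1)$ are the edges ($i$th edge), $(1,n+1)$ is the base, and the others are diagonals. Coloured arcs are pairwise noncrossing ($(i,j),(k,l)$ cross iff $i<k<j<l$ or $k<i<l<j$), and red arcs are diagonals. There is one BNC of size $1$, a blue segment, which is the unit. The operad $\mathrm{CNCB}$ has the BNCs as elements (arity = size). Its composition $\mathfrak C\circ_i\mathfrak D$ ($\mathfrak C$ of size $n$, $\mathfrak D$ of size $m$) glues the base of $\mathfrak D$ on the $i$th edge of $\mathfrak C$. Arcs $(a,b)$ of $\mathfrak C$ become $(\sigma(a),\sigma(b))$ with $\sigma(v)=v$ for $v\le i$ and $v+m-1$ otherwise, and arcs $(a,b)$ of $\mathfrak D$ become $(a+i-1,b+i-1)$, keeping colours. The exception is the arc $(i,i+m)$, which is red if the $i$th edge of $\mathfrak C$ and the base of $\mathfrak D$ are both uncoloured, blue if both are blue, and uncoloured otherwise. For $x,y,z\in\{b,u\}$, $T_{xyz}$ denotes the BNC of size $2$ (a triangle with vertices $1,2,3$) whose first edge $(1,2)$ has colour $x$, whose base $(1,3)$ has colour $y$, and whose second edge $(2,3)$ has colour $z$, where $b$ = blue and $u$ = uncoloured. The suboperad generated by a set is the smallest suboperad containing it. *)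

(* Defs.v *)
From HB Require Import structures.
From mathcomp Require Import all_boot.
Set Implicit Arguments. Unset Strict Implicit. Unset Printing Implicit Defensive.

Inductive color := Unc | Blue | Red.

Definition color_eqb (x y : color) : bool :=
  match x, y with
  | Unc, Unc | Blue, Blue | Red, Red => true | _, _ => false end.
Lemma color_eqP : Equality.axiom color_eqb.
Proof. by case; case; constructor. Qed.
HB.instance Definition _ := hasDecEq.Build color color_eqP.

(* ---------- Bicoloured configurations ----------
   A configuration of size n (vertices 1..n+1) is stored as the pair
   (n, list of the colours of the arcs (i,j), 1 <= i < j <= n+1,
   listed in the fixed order [arcs n]).  Equality is thus extensional. *)
Definition arcs (n : nat) : seq (nat * nat) :=
  flatten [seq [seq (i, j) | j <- iota i.+1 (n.+1 - i)] | i <- iota 1 n.+1].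

Definition cncb := (nat * seq color)%type.
Definition csize (x : cncb) : nat := x.1.
(* colour of the arc (i,j) (uncoloured if (i,j) is not an arc) *)
Definition col (x : cncb) (i j : nat) : color :=
  nth Unc x.2 (index (i, j) (arcs x.1)).
Definition mkc (n : nat) (f : nat -> nat -> color) : cncb :=
  (n, [seq f p.1 p.2 | p <- arcs n]).

Definition cunit : cncb := mkc 1 (fun _ _ => Blue).

(* Triangle T_xyz: first edge (1,2) colour x, base (1,3) colour y,
   second edge (2,3) colour z. *)
Definition T (x y z : color) : cncb :=
  mkc 2 (fun i j => if (i, j) == (1, 2) then x
                    else if (i, j) == (1, 3) then y else z).

(* Partial composition C o_i D, glueing the base of D on the i-th edge of C.
   Result has size n + m - 1 where n = size C, m = size D. *)
Definition ccomp (C : cncb) (i : nat) (D : cncb) : cncb :=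
  let n := csize C in let m := csize D in
  let sinv v := if v <= i then v else v - m + 1 in
  mkc (n + m - 1) (fun p q =>
    if (p == i) && (q == i + m) then
      let e := col C i i.+1 in let b := col D 1 m.+1 in
      if (e == Unc) && (b == Unc) then Red
      else if (e == Blue) && (b == Blue) then Blue else Unc
    else if (i <= p) && (q <= i + m) then col D (p - i + 1) (q - i + 1)
    else if ((i < p) && (p < i + m)) || ((i < q) && (q < i + m)) then Unc
    else col C (sinv p) (sinv q)).

Definition ca : cncb := T Blue Blue Blue.
Definition cc : cncb := T Blue Unc Unc.

Inductive inO : cncb -> Prop :=
  | inO_unit : inO cunit
  | inO_a : inO ca
  | inO_c : inO cc
  | inO_comp x y i : inO x -> inO y -> 1 <= i <= csize x -> inO (ccomp x i y).

(* ---------- The free (nonsymmetric) operad on two binary generators ----------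
   Node true = alpha, Node false = gamma.  Leaves = inputs. *)
Inductive tree := Leaf | Node of bool & tree & tree.

Fixpoint arity (t : tree) : nat :=
  match t with Leaf => 1 | Node _ l r => arity l + arity r end.

Fixpoint graft (t : tree) (i : nat) (s : tree) : tree :=
  match t with
  | Leaf => if i == 1 then s else Leaf
  | Node g l r => if i <= arity l then Node g (graft l i s) r
                  else Node g l (graft r (i - arity l) s)
  end.

Definition alpha : tree := Node true Leaf Leaf.
Definition gamma : tree := Node false Leaf Leaf.

Definition rel1_l := graft (graft gamma 2 alpha) 3 gamma.
Definition rel1_r := graft (graft gamma 1 gamma) 2 alpha.
Definition rel2_l := graft (graft alpha 2 gamma) 3 alpha.
Definition rel2_r := graft (graft alpha 1 gamma) 2 alpha.

Inductive cong : tree -> tree -> Prop :=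
  | cong_refl t : cong t t
  | cong_sym t u : cong t u -> cong u t
  | cong_trans t u v : cong t u -> cong u v -> cong t v
  | cong_rel1 : cong rel1_l rel1_r
  | cong_rel2 : cong rel2_l rel2_r
  | cong_compl t t' i s : cong t t' -> 1 <= i <= arity t ->
      cong (graft t i s) (graft t' i s)
  | cong_compr t i s s' : cong s s' -> 1 <= i <= arity t ->
      cong (graft t i s) (graft t i s').

(* The operad morphism free operad -> CNCB, alpha |-> a, gamma |-> c.
   Node g l r = (g o_2 r) o_1 l in the free operad. *)
Definition gen_el (g : bool) : cncb := if g then ca else cc.
Fixpoint eval (t : tree) : cncb :=
  match t with
  | Leaf => cunit
  | Node g l r => ccomp (ccomp (gen_el g) 2 (eval r)) 1 (eval l)
  end.

(* Main.v *)
Require Import Defs.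
From mathcomp Require Import all_boot zify.
Set Implicit Arguments. Unset Strict Implicit. Unset Printing Implicit Defensive.


Lemma mem_arcs n i j : ((i, j) \in arcs n) = [&& 1 <= i, i < j & j <= n.+1].
Proof.
apply/idP/idP.
- case/flatten_mapP => x; rewrite mem_iota => /andP [H1 H2].
  case/mapP => y; rewrite mem_iota => /andP [H3 H4] [-> ->]. apply/and3P; split; lia.
- case/and3P => H1 H2 H3. apply/flatten_mapP; exists i; first by rewrite mem_iota; lia.
  apply/mapP; exists j => //; rewrite mem_iota; lia.
Qed.

Lemma col_mkc n f i j : 1 <= i -> i < j -> j <= n.+1 -> col (mkc n f) i j = f i j.
Proof.
move=> H1 H2 H3. rewrite /col /mkc /=.
have Hm : (i, j) \in arcs n by rewrite mem_arcs; apply/and3P.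
rewrite (nth_map (0,0)) ?index_mem // nth_index //.
Qed.

Lemma mkc_ext n f g : (forall i j, 1 <= i -> i < j -> j <= n.+1 -> f i j = g i j) ->
  mkc n f = mkc n g.
Proof.
move=> H. rewrite /mkc; congr pair; apply/eq_in_map => [[i j]].
rewrite mem_arcs => /and3P [H1 H2 H3] /=. exact: H.
Qed.

Definition combine (e b : color) : color :=
  if (e == Unc) && (b == Unc) then Red else if (e == Blue) && (b == Blue) then Blue else Unc.

Definition compf (n : nat) (f : nat -> nat -> color) (i m : nat) (h : nat -> nat -> color) (p q : nat) : color :=
  let sinv v := if v <= i then v else v - m + 1 in
  if (p == i) && (q == i + m) then combine (f i i.+1) (h 1 m.+1)
  else if (i <= p) && (q <= i + m) then h (p - i + 1) (q - i + 1)
  else if ((i < p) && (p < i + m)) || ((i < q) && (q < i + m)) then Unc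
  else f (sinv p) (sinv q).

Lemma ccomp_mkc n f i m h : 1 <= i <= n -> 1 <= m ->
  ccomp (mkc n f) i (mkc m h) = mkc (n + m - 1) (compf n f i m h).
Proof.
move=> /andP [Hi1 Hi2] Hm. rewrite /ccomp /csize /=. apply: mkc_ext => p q H1 H2 H3.
rewrite /compf /combine.
case: ifP => [/andP [/eqP E1 /eqP E2]|_].
  subst. rewrite col_mkc ?col_mkc //; lia.
case: ifP => [/andP [E1 E2]|_]; first by rewrite col_mkc //; lia.
case: ifP => // E.
rewrite col_mkc //; repeat case: ifP; lia.
Qed.

Definition gcol (g : bool) := if g then Blue else Unc.
Definition basec (t : tree) := match t with Node false _ _ => Unc | _ => Blue end.
Definition rcomb (g : bool) (r : tree) :=
  if g then basec r else match r with Node false _ _ => Red | _ => Unc end.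

Fixpoint tc (t : tree) (i j : nat) : color :=
  match t with
  | Leaf => if (i == 1) && (j == 2) then Blue else Unc
  | Node g l r =>
    if (i == 1) && (j == (arity l + arity r).+1) then gcol g
    else if j <= (arity l).+1 then tc l i j
    else if (arity l).+1 <= i then
      (if (i == (arity l).+1) && (j == (arity l + arity r).+1) then combine (gcol g) (basec r)
       else tc r (i - arity l) (j - arity l))
    else Unc
  end.

Lemma tcN g l r i j : tc (Node g l r) i j =
    if (i == 1) && (j == (arity l + arity r).+1) then gcol g
    else if j <= (arity l).+1 then tc l i j
    else if (arity l).+1 <= i then
      (if (i == (arity l).+1) && (j == (arity l + arity r).+1) then combine (gcol g) (basec r)
       else tc r (i - arity l) (j - arity l))
    else Unc.
Proof. by []. Qed.

Lemma arity_pos t : 0 < arity t.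
Proof. elim: t => //= g l IHl r IHr; lia. Qed.

Lemma tc_base t : tc t 1 (arity t).+1 = basec t.
Proof. case: t => [|g l r] //=. rewrite !eqxx /=. by case: g. Qed.

Lemma basec_nR t : basec t != Red.
Proof. by case: t => [|[] ? ?]. Qed.

Ltac ifs := repeat (simpl; match goal with |- context[if ?c then _ else _] =>
  (match c with context[if _ then _ else _] => fail 1 | _ => idtac end);
  let H := fresh "C" in case H: c; try (exfalso; lia) end).

Lemma eval_tc t : eval t = mkc (arity t) (tc t).
Proof.
elim: t => [|g l IHl r IHr].
  rewrite /= /cunit; apply: mkc_ext => i j H1 H2 H3 /=.
  have -> : i = 1 by lia. have -> : j = 2 by lia. by [].
have Hl := arity_pos l. have Hr := arity_pos r.
rewrite /= IHl IHr.
have -> : gen_el g = mkc 2 (fun i j => if (i, j) == (1, 2) then Blue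
                    else if (i, j) == (1, 3) then gcol g else gcol g).
  by case: g.
rewrite (@ccomp_mkc 2 _ 2 (arity r)) //.
rewrite ccomp_mkc; [|lia|lia].
have -> : 2 + arity r - 1 + arity l - 1 = arity l + arity r by lia.
apply: mkc_ext => p q H1 H2 H3.
rewrite /compf.
rewrite (tc_base l) (tc_base r) ?xpair_eqE.
have Bl := basec_nR l.
case: g; case: (basec r) (basec_nR r) => // _; case El: (basec l) Bl => // _; ifs.
all: try reflexivity; try (congr tc; lia).
all: rewrite (_ : p = 1); [rewrite (_ : q = (arity l).+1); [by rewrite tc_base El | lia] | lia].
Qed.

Lemma arity_graft t i s : 1 <= i <= arity t -> arity (graft t i s) = arity t + arity s - 1.
Proof.
elim: t i => [|g l IHl r IHr] i /= Hi.
  have -> : i = 1 by lia. by rewrite /=; lia.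
have := arity_pos l; have := arity_pos r; have := arity_pos s => ? ? ?.
case: ifP => H /=.
  rewrite IHl; lia.
rewrite IHr; lia.
Qed.

Lemma combine_B e : e != Red -> combine e Blue = e.
Proof. by case: e. Qed.

Lemma basec_graftN g a b j s : basec (graft (Node g a b) j s) = basec (Node g a b).
Proof. by rewrite /=; case: ifP. Qed.


Lemma compf_shift c M F G i S H p q i' p' q' :
  (forall a b, 0 < a -> a < b -> b <= M.+1 -> ~ (a = 1 /\ b = M.+1) -> F (c + a) (c + b) = G a b) ->
  1 < M -> 0 < i' <= M -> 0 < p' -> p' < q' -> q' <= M + S -> ~ (p' = 1 /\ q' = M + S) -> 0 < S ->
  i = c + i' -> p = c + p' -> q = c + q' ->
  compf (c + M) F i S H p q = compf M G i' S H p' q'.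
Proof.
move=> HF HM Hi H1 H2 H3 H4 HS -> -> ->. rewrite /compf.
ifs; try reflexivity; try (f_equal; lia).
all: try (match goal with |- combine (?f ?x ?y) ?z = combine (?g ?u ?v) ?z =>
   rewrite -(HF u v); [do 2 f_equal; lia|lia ..] end).
all: try (match goal with |- ?f ?x ?y = ?g ?u ?v =>
   rewrite -(HF u v); [f_equal; lia|lia ..] end).
Qed.

Lemma tcN_right g l r p q : arity l < p -> p < q -> q <= (arity l + arity r).+1 ->
  ~ (p = (arity l).+1 /\ q = (arity l + arity r).+1) -> tc (Node g l r) p q = tc r (p - arity l) (q - arity l).
Proof. move=> *; rewrite tcN; ifs => //. Qed.

Lemma right_small g l r r' i S H p q : arity r' = arity r + S - 1 -> basec r' = basec r ->
  1 < arity r -> arity l < i <= arity l + arity r -> 0 < S -> 0 < p -> p < q ->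
  q <= arity l + arity r + S -> ~ (arity l < p /\ ~ (p = (arity l).+1 /\ q = (arity l + arity r').+1)) ->
  tc (Node g l r') p q = compf (arity l + arity r) (tc (Node g l r)) i S H p q.
Proof.
move=> Ar Bg Hr Hi HS H1 H2 H3 Hreg. rewrite /compf !tcN Ar Bg.
ifs; try reflexivity; try (f_equal; lia).
Qed.

Lemma tc_graft t i s p q : 1 <= i <= arity t -> 1 <= p -> p < q -> q <= arity t + arity s ->
  tc (graft t i s) p q = compf (arity t) (tc t) i (arity s) (tc s) p q.
Proof.
have Hs := arity_pos s.
elim: t i p q => [|g l IHl r IHr] i p q /= Hi H1 H2 H3.
{ have E : i = 1 by lia. subst i. rewrite /= /compf.
  have Bs := basec_nR s.
  case Es : (basec s) Bs => // _; ifs.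
  all: try reflexivity; try (congr tc; lia).
  all: rewrite (_ : p = 1); [rewrite (_ : q = (arity s).+1); [by rewrite tc_base Es | lia] | lia]. }
have Hl := arity_pos l; have Hr := arity_pos r.
have Bl := basec_nR l; have Br := basec_nR r.
rewrite [graft _ _ _]/=. case: ifP => Hil.
{ rewrite /compf !tcN arity_graft; last by lia.
  ifs; try reflexivity; try (f_equal; lia).
  all: try (rewrite IHl; [|lia|lia|lia|lia]; rewrite /compf; ifs; try reflexivity; try (f_equal; lia)). }
move: Hil => /negbT; rewrite -ltnNge => Hil.
have [Er|[Bg Hr2]] : r = Leaf \/ (basec (graft r (i - arity l) s) = basec r /\ 1 < arity r).
  case: r {IHr Hr Br Hi H3} => [|g' a b]; [by left|right; rewrite basec_graftN; split=> //].
  have := arity_pos a; have := arity_pos b; rewrite /=; lia.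
{ subst r.
  simpl in Hi, H3. have Ei : i = (arity l).+1 by lia. subst i.
  rewrite (_ : (arity l).+1 - arity l = 1) /=; [|lia].
  have Bs := basec_nR s.
  rewrite /compf ?tc_base. case Es: (basec s) Bs => // _; ifs; try reflexivity; try (f_equal; lia).
  all: by case: g. }
have Ar' := arity_graft s (_ : 1 <= i - arity l <= arity r).
case: (boolP ((arity l < p) && ((p != (arity l).+1) || (q != (arity l + arity (graft r (i - arity l) s)).+1)))) => Hreg.
  rewrite tcN_right; [|lia|lia|rewrite Ar'; lia|lia].
  rewrite IHr; [|lia|lia|lia|lia].
  symmetry; apply: compf_shift; try lia.
  move=> a b Ha Hab Hb Hn. ifs; f_equal; lia.
apply: right_small => //; try lia.
Qed.



Lemma csize_eval t : csize (eval t) = arity t.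
Proof. by rewrite eval_tc. Qed.

Lemma eval_graft t i s : 1 <= i <= arity t -> eval (graft t i s) = ccomp (eval t) i (eval s).
Proof.
move=> Hi. rewrite !eval_tc ccomp_mkc //; last exact: arity_pos.
rewrite arity_graft //. apply: mkc_ext => p q H1 H2 H3.
apply: tc_graft => //; lia.
Qed.

Lemma cong_eval t1 t2 : cong t1 t2 -> eval t1 = eval t2.
Proof.
induction 1; [done|congruence|congruence|by vm_compute|by vm_compute| |].
- rewrite !eval_graft //. by rewrite IHcong.
  by rewrite -csize_eval -IHcong csize_eval.
- by rewrite !eval_graft // IHcong.
Qed.

Lemma inO_eval x : inO x <-> exists t, eval t = x.
Proof.
split.
- elim => [|||x0 y0 i _ [t Et] _ [s Es] Hi].
  + by exists Leaf.
  + by exists alpha; vm_compute.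
  + by exists gamma; vm_compute.
  + exists (graft t i s). rewrite eval_graft -?Et -?Es //. by rewrite -csize_eval Et.
- case=> t <-. elim: t => [|g l IHl r IHr] /=; first exact: inO_unit.
  have Hg : inO (gen_el g) by case: g; [exact: inO_a|exact: inO_c].
  apply: inO_comp => //.
    apply: inO_comp => //. by case: g {Hg}.
  rewrite /ccomp /csize /=. have := arity_pos r. clear Hg; case: g => /=; lia.
Qed.


Definition redex (l : tree) := match l with Node false _ (Node true _ _) => true | _ => false end.
Fixpoint nfb t := match t with Leaf => true | Node g l r => [&& ~~ redex l, nfb l & nfb r] end.
Fixpoint mu t := match t with Leaf => 0 | Node _ l r => mu l + mu r + arity l end.

Lemma cong_arity t u : cong t u -> arity t = arity u.
Proof. by move/cong_eval => E; rewrite -!csize_eval E. Qed.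

Lemma cong_node g l l' r r' : cong l l' -> cong r r' -> cong (Node g l r) (Node g l' r').
Proof.
move=> Hl Hr.
apply: (@cong_trans _ (graft (Node g Leaf r) 1 l')).
  have -> : Node g l r = graft (Node g Leaf r) 1 l by [].
  apply: cong_compr => //.
have -> : Node g l' r' = graft (graft (Node g Leaf Leaf) 2 r') 1 l' by [].
have -> : Node g Leaf r = graft (Node g Leaf Leaf) 2 r by [].
apply: cong_compl => //. apply: cong_compr => //.
all: try (rewrite /= addn1 ltnS; exact: arity_pos).
Qed.

Lemma graft_rel4 t u x y z w : cong t u -> arity t = 4 ->
  cong (graft (graft (graft (graft t 4 w) 3 z) 2 y) 1 x)
       (graft (graft (graft (graft u 4 w) 3 z) 2 y) 1 x).
Proof.
move=> H At. have Au := cong_arity H. rewrite At in Au.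
have := arity_pos x; have := arity_pos y; have := arity_pos z; have := arity_pos w => ? ? ? ?.
have A4 v : arity v = 4 -> arity (graft v 4 w) = 3 + arity w by move=> E; rewrite arity_graft E; lia.
apply: cong_compl; last first.
  rewrite !arity_graft ?At; lia.
apply: cong_compl; last by rewrite !arity_graft ?At; lia.
apply: cong_compl; last by rewrite !arity_graft ?At; lia.
apply: cong_compl; last by rewrite ?At; lia.
exact: H.
Qed.

Lemma cong_step g x y z w :
  cong (Node g (Node false x (Node true y z)) w) (Node g x (Node (~~ g) y (Node g z w))).
Proof.
have := arity_pos x; have := arity_pos y; have := arity_pos z; have := arity_pos w => ? ? ? ?.
case: g.
- have H := graft_rel4 x y z w (cong_sym cong_rel2) (erefl _).
  move: H. rewrite /rel2_r /rel2_l /=.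
  by repeat (case: ifP => ?; try (exfalso; lia)); rewrite /=.
- have H := graft_rel4 x y z w (cong_sym cong_rel1) (erefl _).
  move: H. rewrite /rel1_r /rel1_l /=.
  by repeat (case: ifP => ?; try (exfalso; lia)); rewrite /=.
Qed.

Lemma nf_exists t : exists t', [/\ cong t t', nfb t' & mu t' <= mu t].
Proof.
suff H : forall n t, mu t < n -> exists t', [/\ cong t t', nfb t' & mu t' <= mu t] by exact: (H _ t (ltnSn _)).
elim=> [|n IH] [|g l r] //= Hmu.
  by exists Leaf; split => //; exact: cong_refl.
have := arity_pos l => Hl.
have [l' [Cl Nl Ml]] := IH l (ltac:(lia)).
have [r' [Cr Nr Mr]] := IH r (ltac:(lia)).
have Al := cong_arity Cl.
case Rl: (redex l').
- move: Rl Cl Nl Ml Al. case: l' => [|[] x [|[] y z]] //= _ Cl Nl Ml Al.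
  set t2 := Node g x (Node (~~ g) y (Node g z r')).
  have Mt2 : mu t2 < n.
    rewrite /t2 /=. have := arity_pos x; have := arity_pos y. simpl in Al, Ml. lia.
  have [t3 [C3 N3 M3]] := IH t2 Mt2.
  exists t3; split => //.
    apply: cong_trans (cong_node g Cl Cr) _. apply: cong_trans (cong_step g x y z r') C3.
  move: M3. rewrite /t2 /=. have := arity_pos x; have := arity_pos y. simpl in Al, Ml. lia.
- exists (Node g l' r'); split.
  + exact: cong_node.
  + by rewrite /= Rl Nl Nr.
  + rewrite /= -Al. lia.
Qed.



Fixpoint lastp (P : nat -> bool) n := match n with 0 => 0 | n'.+1 => if P n then n else lastp P n' end.

Lemma lastp_spec (P : nat -> bool) n w : 0 < w <= n -> P w -> (forall j, w < j <= n -> ~~ P j) -> lastp P n = w.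
Proof.
elim: n => [|n IH] Hw Pw Hj /=; first lia.
case: (ltngtP w n.+1) => E; last by rewrite -E Pw.
- rewrite ifF; last by apply/negbTE/Hj; lia.
  apply: IH => //; first lia. move=> j Hj'; apply: Hj; lia.
- lia.
Qed.

Lemma lastp_cases (P : nat -> bool) n : lastp P n = 0 \/ (P (lastp P n) /\ 0 < lastp P n <= n).
Proof.
elim: n => [|n IH] /=; first by left.
case: ifP => H; first by right; split => //; lia.
case: IH => [->|[H1 H2]]; [by left|right; split => //; lia].
Qed.

Definition stepf (f : nat -> nat -> color) N w :=
  let v := lastp (fun v => (w < v) && (f w v == Red)) N in
  let v' := if v != 0 then v else if f w w.+1 == Unc then w.+1 else w in
  if v' < N then v' else w.

Definition apex f n := iter n (stepf f n.+1) (lastp (fun j => f 1 j == Blue) n).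

Fixpoint w0t t := match t with
  | Leaf => 2 | Node true a b => (arity a + arity b).+1 | Node false a _ => w0t a end.

Lemma tc_1_nR t j : tc t 1 j != Red.
Proof.
elim: t j => [|g l IHl r IHr] j; first by rewrite /=; case: ifP.
have := arity_pos l => Hl.
rewrite tcN; case: ifP => _; first by case: g.
case: ifP => _; first exact: IHl.
case: ifP => H; [lia|done].
Qed.

Lemma tc_12 t : tc t 1 2 = Blue.
Proof.
elim: t => [|g l IHl r IHr] //.
have := arity_pos l; have := arity_pos r => ? ?.
rewrite tcN ifF; last lia. by rewrite ifT //; lia.
Qed.

Lemma w0t_spec t : [/\ 2 <= w0t t <= (arity t).+1, tc t 1 (w0t t) = Blue &
  forall j, w0t t < j <= (arity t).+1 -> tc t 1 j != Blue].
Proof.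
elim: t => [|[] l IHl r IHr]; first by split => //= j; lia.
- have := arity_pos l; have := arity_pos r => ? ?.
  split => /=; [lia| |lia]. by rewrite !eqxx.
- have := arity_pos l; have := arity_pos r => ? ?.
  case: IHl => H1 H2 H3. split; first (simpl; lia).
  + rewrite [w0t _]/= tcN ifF; last lia. by rewrite ifT //; lia.
  + move=> j. rewrite [w0t _]/= [arity _]/= => Hj. rewrite tcN. case: ifP => _ //. case: ifP => Hjk; first (apply: H3; lia).
    case: ifP => ?; [lia|done].
Qed.

Lemma lastp_none (P : nat -> bool) n : (forall j, 0 < j <= n -> ~~ P j) -> lastp P n = 0.
Proof.
elim: n => [|n IH] H //=. rewrite ifF; last by apply/negbTE/H; lia.
apply: IH => j Hj; apply: H; lia.
Qed.

Lemma chain s f N : nfb s -> ~~ redex s ->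
  (forall w v, 2 <= w -> w < v -> v <= (arity s).+1 -> f w v = tc s w v) ->
  (forall w v, 2 <= w -> w <= arity s -> (arity s).+1 < v -> v <= N -> f w v = Unc) ->
  (arity s).+1 < N ->
  exists2 d, d <= arity s & iter d (stepf f N) (w0t s) = (arity s).+1.
Proof.
elim: s => [|g a IHa b IHb] Hn Hr HA HB HN; first by exists 0.
have As : arity (Node g a b) = arity a + arity b by [].
have Ha0 := arity_pos a; have Hb0 := arity_pos b.
rewrite As in HA HB HN *. clear As.
case: g Hn Hr HA HB => Hn Hr HA HB; first by exists 0 => //; lia.
clear IHb.
move: Hn => /and3P [Ra Na Nb].
have [da Hda Ida] : exists2 d, d <= arity a & iter d (stepf f N) (w0t a) = (arity a).+1.
  apply: IHa => //.
  - move=> w v Hw Hwv Hv; rewrite HA; [|lia..]. rewrite tcN ifF; [|lia]. rewrite ifT //; lia.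
  - move=> w v Hw Hwa Hv HvN; case: (leqP v (arity a + arity b).+1) => Hv'.
      rewrite HA; [|lia..]. rewrite tcN ifF; [|lia]. rewrite ifF; [|lia]. rewrite ifF //; lia.
    rewrite HB //; lia.
  - lia.
clear IHa. exists da.+1; first lia.
rewrite iterS [w0t _]/= Ida /stepf.
have key : f (arity a).+1 (arity a + arity b).+1 = combine Unc (basec b).
  rewrite HA; [|lia..]. rewrite tcN ifF; [|lia]. rewrite ifF; [|lia]. rewrite ifT; [|lia].
  by rewrite ifT //; rewrite !eqxx.
case: b Hr Nb HA HB HN key Hb0 => [|[] b1 b2] //= Hr Nb HA HB HN key Hb0.
- rewrite lastp_none.
    rewrite /= (_ : (arity a + 1).+1 = (arity a).+2) in key; last lia.
    rewrite key /= ifT //; lia.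
  move=> j Hj. apply/negP => /andP [Hj1 /eqP Hj2].
  case: (ltngtP j (arity a).+2) => Ej; [lia| |].
  + rewrite HB in Hj2; [done|lia..].
  + subst j. rewrite (_ : (arity a).+2 = (arity a + 1).+1) in Hj2; last lia. by rewrite key in Hj2.
- rewrite (@lastp_spec _ N (arity a + (arity b1 + arity b2)).+1).
  + rewrite ifT //.
  + lia.
  + rewrite key /=. apply/andP; split=> //; lia.
  + move=> j Hj. rewrite HB; [by rewrite andbF|lia..].
Qed.

Lemma apex_ok g l r f : nfb (Node g l r) ->
  (forall w v, 0 < w -> w < v -> v <= (arity l + arity r).+1 -> f w v = tc (Node g l r) w v) ->
  apex f (arity l + arity r) = (arity l).+1.
Proof.
move=> /and3P [Rl Nl Nr] Hf.
have Hl0 := arity_pos l; have Hr0 := arity_pos r.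
case: (w0t_spec l) => W1 W2 W3.
have Ew0 : lastp (fun j => f 1 j == Blue) (arity l + arity r) = w0t l.
  apply: lastp_spec; first lia.
  - rewrite Hf; [|lia..]. rewrite tcN ifF; [|lia]. rewrite ifT; [|lia]. by rewrite W2.
  - move=> j Hj. rewrite Hf; [|lia..]. rewrite tcN ifF; [|lia].
    case: ifP => Hjk; first (apply: W3; lia). rewrite ifF //; lia.
have [d Hd Id] : exists2 d, d <= arity l & iter d (stepf f (arity l + arity r).+1) (w0t l) = (arity l).+1.
  apply: chain => //.
  - move=> w v Hw Hwv Hv. rewrite Hf; [|lia..]. rewrite tcN ifF; [|lia]. rewrite ifT //; lia.
  - move=> w v Hw Hwl Hv HvN. rewrite Hf; [|lia..]. rewrite tcN ifF; [|lia]. rewrite ifF; [|lia].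
    rewrite ifF //; lia.
  - lia.
have Fix : stepf f (arity l + arity r).+1 (arity l).+1 = (arity l).+1.
  rewrite /stepf.
  have Hred : forall v, (arity l).+1 < v < (arity l + arity r).+1 -> f (arity l).+1 v != Red.
    move=> v Hv. rewrite Hf; [|lia..]. rewrite tcN ifF; [|lia]. rewrite ifF; [|lia].
    rewrite ifT; [|lia]. rewrite ifF; [|lia].
    rewrite (_ : (arity l).+1 - arity l = 1); [exact: tc_1_nR | lia].
  have [E0|[PL HL]] := lastp_cases (fun v => ((arity l).+1 < v) && (f (arity l).+1 v == Red)) (arity l + arity r).+1.
  + rewrite E0 /=. case HU: (f (arity l).+1 (arity l).+2 == Unc); last by case: ifP.
    case: (ltngtP (arity l).+2 (arity l + arity r).+1) => Ek.
    * exfalso. move: HU. rewrite Hf; [|lia..]. rewrite tcN ifF; [|lia]. rewrite ifF; [|lia].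
      rewrite ifT; [|lia]. rewrite ifF; [|lia].
      rewrite (_ : (arity l).+1 - arity l = 1); [|lia]. rewrite (_ : (arity l).+2 - arity l = 2); [|lia].
      by rewrite tc_12.
    * lia.
    * done.
  + move: PL HL. set L := lastp _ _ => /andP [PL1 PL2] HL.
    have EL : L = (arity l + arity r).+1.
      case: (ltngtP L (arity l + arity r).+1) => // HLn; last lia.
      by move: PL2; rewrite (negbTE (Hred _ _)) //; lia.
    rewrite EL /= ifF //; lia.
rewrite /apex Ew0.
have -> : iter (arity l + arity r) (stepf f (arity l + arity r).+1) (w0t l) =
  iter (arity l + arity r - d) (stepf f (arity l + arity r).+1) (iter d (stepf f (arity l + arity r).+1) (w0t l)).
  by rewrite -iterD subnK //; lia.
rewrite Id. elim: (arity l + arity r - d) => //= m ->. exact: Fix.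
Qed.

Lemma basec_inj g b1 b2 : b1 != Red -> b2 != Red ->
  combine (gcol g) b1 = combine (gcol g) b2 -> b1 = b2.
Proof. by case: g; case: b1; case: b2. Qed.

Lemma nf_inj t1 t2 : nfb t1 -> nfb t2 -> arity t1 = arity t2 ->
  (forall i j, 0 < i -> i < j -> j <= (arity t1).+1 -> tc t1 i j = tc t2 i j) -> t1 = t2.
Proof.
elim: t1 t2 => [|g l IHl r IHr] [|g' l' r'] //.
- move=> _ _ /= A; have := arity_pos l'; have := arity_pos r'; lia.
- move=> _ _ /= A; have := arity_pos l; have := arity_pos r; lia.
move=> N1 N2 A H.
have Hl := arity_pos l; have Hr := arity_pos r; have Hl' := arity_pos l'; have Hr' := arity_pos r'.
have A' : arity l + arity r = arity l' + arity r' by [].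
have Eg : g = g'.
  move: (H 1 (arity l + arity r).+1 (ltac:(lia)) (ltac:(lia)) (leqnn _)).
  rewrite !tcN !eqxx A' eqxx /=. by destruct g, g'.
subst g'.
have Ek : arity l = arity l'.
  have E1 := @apex_ok g l r (tc (Node g l' r')) N1.
  have E2 := @apex_ok g l' r' (tc (Node g l' r')) N2 (fun w v _ _ _ => erefl).
  rewrite -A' in E2. rewrite E1 in E2; first lia.
  move=> w v Hw Hwv Hv. by rewrite H.
have Er : arity r = arity r' by lia.
move: N1 N2 => /and3P [_ Nl Nr] /and3P [_ Nl' Nr'].
congr Node.
- apply: IHl => // i j Hi Hij Hj.
  move: (H i j Hi Hij (ltac:(simpl; lia))). rewrite !tcN -Ek ifF; [|lia]. rewrite ifT; [|lia].
  rewrite ifF; [|lia]. rewrite ifT //; lia.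
- apply: IHr => // i j Hi Hij Hj.
  have HK := H (arity l).+1 (arity l + arity r).+1 (ltac:(lia)) (ltac:(lia)) (leqnn _).
  rewrite !tcN -Ek -Er in HK. rewrite ifF in HK; [|lia]. rewrite ifF in HK; [|lia].
  rewrite ifT in HK; [|lia]. rewrite ifT in HK; [|lia]. rewrite ifF in HK; [|lia]. rewrite ifF in HK; [|lia].
  rewrite ifT in HK; [|lia]. rewrite ifT in HK; [|lia].
  have Eb := basec_inj (basec_nR r) (basec_nR r') HK.
  case: (boolP ((i == 1) && (j == (arity r).+1))) => [/andP [/eqP -> /eqP ->]|Hn].
    by rewrite tc_base Er tc_base Eb.
  move: (H (i + arity l) (j + arity l) (ltac:(lia)) (ltac:(lia)) (ltac:(simpl; lia))).
  rewrite !tcN -Ek -Er. rewrite ifF; [|lia]. rewrite ifF; [|lia]. rewrite ifT; [|lia]. rewrite ifF; [|lia].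
  rewrite ifF; [|lia]. rewrite ifF; [|lia]. rewrite ifT; [|lia]. rewrite ifF; [|lia].
  by rewrite !addnK.
Qed.


Theorem theorem3p9 :
  (forall t, csize (eval t) = arity t) /\
  (forall t i s, 1 <= i <= arity t ->
     eval (graft t i s) = ccomp (eval t) i (eval s)) /\
  (forall x, inO x <-> exists t, eval t = x) /\
  (forall t1 t2, eval t1 = eval t2 <-> cong t1 t2).
Proof.
split; first exact: csize_eval.
split; first exact: eval_graft.
split; first exact: inO_eval.
move=> t1 t2; split; last exact: cong_eval.
move=> E.
have [n1 [C1 N1 _]] := nf_exists t1. have [n2 [C2 N2 _]] := nf_exists t2.
have E' : eval n1 = eval n2 by rewrite -(cong_eval C1) -(cong_eval C2).
have A : arity n1 = arity n2 by rewrite -!csize_eval E'.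
have Hn : n1 = n2.
  apply: nf_inj => // i j Hi Hij Hj.
  move: E'; rewrite !eval_tc -A => E'.
  have := congr1 (fun x => col x i j) E'. by rewrite !col_mkc.
subst n2. exact: cong_trans C1 (cong_sym C2).
Qed.
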